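(* There is an absolute constant $c>0$ such that for all integers $k\ge1$, all $n\le m$ and every $k$-monotone sequence $X\in[n]^m$, $\mathsf{F}^{k}(X)\le c\,k\cdot|X|$.
   Context: A sequence $X\in[n]^m$ is $k$-monotone if it can be partitioned into $k$ (not necessarily contiguous) subsequences that are all increasing or all decreasing. Standing assumption: $m\ge n$. $k$-finger cost: for a static BST $T$ on $[n]$, $d_T(a,b)$ is the number of edges between $a$ and $b$ in $T$. A $k$-finger strategy is an initial vector $\vec\ell\in[n]^k$ and $\vec f\in[k]^m$, finger $f_t$ serving $x_t$, with cost $\sum_{t=1}^m(1+d_T(x_t,p_t))$ where $p_t$ is the position of finger $f_t$ before time $t$ (its last served key, or $\ell_{f_t}$). $\mathsf{F}^k_T(X)$ is the minimum such cost and $\mathsf{F}^k(X)=\min_T\mathsf{F}^k_T(X)$ over BSTs $T$ on $[n]$. *)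

(* Defs.v *)
From mathcomp Require Import all_boot.
Set Implicit Arguments. Unset Strict Implicit. Unset Printing Implicit Defensive.

Inductive tree := Leaf | Node of tree & nat & tree.

Fixpoint inorder (t : tree) : seq nat :=
  match t with Leaf => [::] | Node l k r => inorder l ++ k :: inorder r end.

(* A (static) BST on [n] = {1,...,n}: its in-order traversal is 1,2,...,n
   (this forces the search-tree property and that the key set is exactly [n]). *)
Definition is_bst_on (n : nat) (t : tree) : Prop := inorder t = iota 1 n.

Fixpoint spath (t : tree) (x : nat) : seq nat :=
  match t with
  | Leaf => [::]
  | Node l k r =>
      k :: (if x < k then spath l x else if k < x then spath r x else [::])
  end.

Fixpoint lcp (s1 s2 : seq nat) : nat :=
  match s1, s2 with
  | a :: s1', b :: s2' => if a == b then (lcp s1' s2').+1 else 0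
  | _, _ => 0
  end.

(* d_T(a,b): number of edges on the tree path between nodes a and b
   = depth a + depth b - 2 depth(lca a b). *)
Definition dist (t : tree) (a b : nat) : nat :=
  let pa := spath t a in let pb := spath t b in
  (size pa - lcp pa pb) + (size pb - lcp pa pb).

(* Cost of serving X with finger assignment F, current finger positions pos
   (pos`_i = position of finger i), charging 1 + d_T(x_t, p_t) per access. *)
Fixpoint finger_cost (t : tree) (pos : seq nat) (X F : seq nat) : nat :=
  match X, F with
  | x :: X', f :: F' =>
      1 + dist t x (nth 0 pos f) + finger_cost t (set_nth 0 pos f x) X' F'
  | _, _ => 0
  end.

(* A k-finger strategy on T for X: initial vector l in [n]^k and f in [k]^m
   (fingers indexed 0..k-1). *)
Definition valid_strategy (n k : nat) (X l F : seq nat) : Prop :=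
  size l = k /\ all (fun p => (1 <= p <= n)) l /\
  size F = size X /\ all (fun f => f < k) F.

(* "F^k(X) <= B": some BST T on [n] and some k-finger strategy on T serve X
   at cost at most B (equivalently, min_T min_strategy cost <= B). *)
Definition Fk_le (n k : nat) (X : seq nat) (B : nat) : Prop :=
  exists (t : tree) (l F : seq nat),
    is_bst_on n t /\ valid_strategy n k X l F /\ finger_cost t l X F <= B.

Definition in_range (n : nat) (X : seq nat) : bool := all (fun x => 1 <= x <= n) X.

(* k-monotone: a colouring of positions by k colours such that every colour
   class (as a subsequence of X) is increasing, or every class is decreasing. *)
Definition k_monotone (k : nat) (X : seq nat) : Prop :=
  exists cols : seq nat,
    size cols = size X /\ all (fun c => c < k) cols /\
    ((forall c, c < k -> sorted leq (mask [seq d == c | d <- cols] X)) \/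
     (forall c, c < k -> sorted geq (mask [seq d == c | d <- cols] X))).

(* Main.v *)
Require Import Defs.
From mathcomp Require Import all_boot.
From mathcomp Require Import zify.

Fixpoint spine (i n : nat) : tree :=
  if n is n'.+1 then Node Leaf i (spine i.+1 n') else Leaf.

Lemma inorder_spine n i : inorder (spine i n) = iota i n.
Proof. by elim: n i => [|n IH] i //=; rewrite IH. Qed.

Lemma spath_spine n i x : i <= x < i + n -> spath (spine i n) x = iota i (x - i).+1.
Proof.
elim: n i => [|n IH] i /=; first by lia.
move=> H; rewrite ltnNge (_ : i <= x) ?andTb; last by lia.
case: ltnP => Hix /=.
  rewrite IH; last by lia.
  by congr (_ :: _); congr iota; lia.
have -> : x - i = 0 by lia.
by [].
Qed.

Lemma lcp_iota p q i : lcp (iota i p) (iota i q) = minn p q.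
Proof.
elim: p q i => [|p IH] [|q] i //=; rewrite eqxx IH; lia.
Qed.

Lemma dist_spine n a b : 1 <= a <= n -> 1 <= b <= n ->
  dist (spine 1 n) a b = (a - b) + (b - a).
Proof.
move=> Ha Hb; rewrite /dist !spath_spine; try lia.
rewrite lcp_iota !size_iota; lia.
Qed.

Lemma sumn_set_nth (pos : seq nat) c x : c < size pos ->
  sumn (set_nth 0 pos c x) + nth 0 pos c = sumn pos + x.
Proof.
elim: pos c => [|p pos IH] [|c] //= H.
  lia.
have := IH c H; lia.
Qed.

Lemma all_set_nth (P : pred nat) (pos : seq nat) c x : c < size pos ->
  all P pos -> P x -> all P (set_nth 0 pos c x).
Proof.
elim: pos c => [|p pos IH] [|c] //= H /andP [Hp Hr] Hx.
  by rewrite Hx.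
by rewrite Hp IH.
Qed.

Lemma cost_inc n k (X cols pos : seq nat) :
  in_range n X -> all (fun c => c < k) cols -> size cols = size X ->
  size pos = k -> all (fun p => 1 <= p <= n) pos ->
  (forall c, c < k -> sorted leq (nth 0 pos c :: mask [seq d == c | d <- cols] X)) ->
  finger_cost (spine 1 n) pos X cols + sumn pos <= size X + k * n.
Proof.
elim: X cols pos => [|x X IH] [|c cols] pos //=.
- move=> _ _ _ <- Hp _; elim: pos Hp => [|p pos IHp] //= /andP [H1 H2].
  have := IHp H2; lia.
- move=> /andP [Hx HX] /andP [Hc Hcols] [Hsz] Hpos Hall Hsort.
  have Hcp : c < size pos by rewrite Hpos.
  have Hpn : 1 <= nth 0 pos c <= n by apply: (all_nthP 0 Hall).
  have Hle : nth 0 pos c <= x.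
    by have := Hsort c Hc; rewrite eqxx /= => /andP [].
  rewrite dist_spine //.
  have := IH cols (set_nth 0 pos c x) HX Hcols Hsz.
  rewrite size_set_nth (maxn_idPr Hcp) => /(_ Hpos).
  move=> /(_ (@all_set_nth (fun p => 1 <= p <= n) pos c x Hcp Hall Hx)).
  have Hs := @sumn_set_nth pos c x Hcp.
  have : forall c', c' < k -> sorted leq (nth 0 (set_nth 0 pos c x) c' ::
            mask [seq d == c' | d <- cols] X).
    move=> c' Hc'; have := Hsort c' Hc'; rewrite nth_set_nth /=.
    case: eqP => [<-|Hne]; first by rewrite eqxx /= => /andP [].
    by rewrite ifN_eq //; apply/eqP => E; apply: Hne.
  move=> H /(_ H); lia.
Qed.

Lemma cost_dec n k (X cols pos : seq nat) :
  in_range n X -> all (fun c => c < k) cols -> size cols = size X ->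
  size pos = k -> all (fun p => 1 <= p <= n) pos ->
  (forall c, c < k -> sorted geq (nth 0 pos c :: mask [seq d == c | d <- cols] X)) ->
  finger_cost (spine 1 n) pos X cols <= size X + sumn pos.
Proof.
elim: X cols pos => [|x X IH] [|c cols] pos //=.
move=> /andP [Hx HX] /andP [Hc Hcols] [Hsz] Hpos Hall Hsort.
have Hcp : c < size pos by rewrite Hpos.
have Hpn : 1 <= nth 0 pos c <= n by apply: (all_nthP 0 Hall).
have Hle : x <= nth 0 pos c.
  by have := Hsort c Hc; rewrite eqxx /= => /andP [].
rewrite dist_spine //.
have := IH cols (set_nth 0 pos c x) HX Hcols Hsz.
rewrite size_set_nth (maxn_idPr Hcp) => /(_ Hpos).
move=> /(_ (@all_set_nth (fun p => 1 <= p <= n) pos c x Hcp Hall Hx)).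
have Hs := @sumn_set_nth pos c x Hcp.
have : forall c', c' < k -> sorted geq (nth 0 (set_nth 0 pos c x) c' ::
          mask [seq d == c' | d <- cols] X).
  move=> c' Hc'; have := Hsort c' Hc'; rewrite nth_set_nth /=.
  case: eqP => [<-|Hne]; first by rewrite eqxx /= => /andP [].
  by rewrite ifN_eq //; apply/eqP => E; apply: Hne.
move=> H /(_ H); lia.
Qed.

Lemma sumn_nseq k a : sumn (nseq k a) = k * a.
Proof. elim: k => //= k ->; lia. Qed.

Theorem theorem11 :
  exists c : nat, 0 < c /\
    forall (k n m : nat) (X : seq nat),
      1 <= k -> 1 <= n -> n <= m ->
      size X = m -> in_range n X -> k_monotone k X ->
      Fk_le n k X (c * k * size X).
Proof.
exists 2; split => // k n m X Hk Hn Hnm Hsz Hr [cols [Hcs [Hcall [Hinc|Hdec]]]].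
- exists (spine 1 n), (nseq k 1), cols; split; first exact: inorder_spine.
  split.
    split; first by rewrite size_nseq.
    split; first by apply/(all_nthP 0) => i; rewrite size_nseq => Hi; rewrite nth_nseq Hi; lia.
    by [].
  have := @cost_inc n k X cols (nseq k 1) Hr Hcall Hcs (size_nseq _ _).
  have Hall : all (fun p => 1 <= p <= n) (nseq k 1).
    by apply/(all_nthP 0) => i; rewrite size_nseq => Hi; rewrite nth_nseq Hi; lia.
  move=> /(_ Hall).
  have H : forall c, c < k -> sorted leq (nth 0 (nseq k 1) c :: mask [seq d == c | d <- cols] X).
    move=> c Hc; rewrite nth_nseq Hc /=.
    have := Hinc c Hc; case E: (mask _ _) => [|y ys] //= ->; rewrite andbT.
    have : y \in mask [seq d == c | d <- cols] X by rewrite E mem_head.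
    move=> /mem_mask /(allP Hr) /=; lia.
  move=> /(_ H); rewrite sumn_nseq; nia.
- exists (spine 1 n), (nseq k n), cols; split; first exact: inorder_spine.
  have Hall : all (fun p => 1 <= p <= n) (nseq k n).
    by apply/(all_nthP 0) => i; rewrite size_nseq => Hi; rewrite nth_nseq Hi; lia.
  split; first by split; [rewrite size_nseq | split].
  have := @cost_dec n k X cols (nseq k n) Hr Hcall Hcs (size_nseq _ _) Hall.
  have H : forall c, c < k -> sorted geq (nth 0 (nseq k n) c :: mask [seq d == c | d <- cols] X).
    move=> c Hc; rewrite nth_nseq Hc /=.
    have := Hdec c Hc; case E: (mask _ _) => [|y ys] //= ->; rewrite andbT.
    have : y \in mask [seq d == c | d <- cols] X by rewrite E mem_head.
    move=> /mem_mask /(allP Hr) /=; lia.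
  move=> /(_ H); rewrite sumn_nseq; nia.
Qed.
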